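(* Let $I=(N,O,\succsim)$ be a general instance and $p$ a generalized deterministic matching, with associated deterministic matching $p'$ for the associated instance $I'$. Then $p$ is weakly stable if and only if $p'$ is weakly stable.
   Context: General instance: $N=\{1,\dots,n\}$ agents, $O=\{o_1,\dots,o_m\}$ objects ($m,n\ge1$ arbitrary), $\emptyset$ the null object. Each agent $i$ has a weak order $\succsim_i$ over $O\cup\{\emptyset\}$ and each object $o$ a weak order $\succsim_o$ over $N\cup\{\emptyset\}$, with either $o\succ_i\emptyset$ or $\emptyset\succ_i o$, and either $i\succ_o\emptyset$ or $\emptyset\succ_o i$. $(i,o)$ is an acceptable pair if $o\succ_i\emptyset$ and $i\succ_o\emptyset$. A generalized deterministic matching is an $n\times m$ $\{0,1\}$-matrix with at most one $1$ per row and column. $p$ is individually rational if $p(i,o)=0$ whenever $\emptyset\succ_i o$ or $\emptyset\succ_o i$. $p$ is weakly stable if it is individually rational and there is no acceptable pair $(i,o)$ with $\sum_{o':o'\succsim_i o}p(i,o')=0$ and $\sum_{j:j\succsim_o i}p(j,o)=0$. Associated instance: $D=\{d_1,\dots,d_m\}$, $\Phi=\{\phi_1,\dots,\phi_n\}$, $N'=N\cup D$, $O'=O\cup\Phi$. Weak orders $\succsim'$ (blocks from best to worst, consecutive blocks strictly ordered): for $i\in N$: objects acceptable to $i$ ordered by $\succsim_i$, then $\phi_i$, then $\phi_k$ ($k\ne i$) in increasing index, then objects unacceptable to $i$ ordered by $\succsim_i$; for $o_j$: agents acceptable to $o_j$ ordered by $\succsim_{o_j}$, then $d_j$, then $d_k$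 ($k\ne j$) in increasing index, then agents unacceptable to $o_j$ ordered by $\succsim_{o_j}$; for $d_j$: $o_j$, then the other objects of $O$ in increasing index, then null objects with $\phi_k\succsim'_{d_j}\phi_l$ iff $k\succsim_{o_j}l$; for $\phi_i$: $i$, then other agents of $N$ in increasing index, then dummies with $d_k\succsim'_{\phi_i}d_l$ iff $o_k\succsim_i o_l$. The associated matching $p'$: $p'(i,o_j)=p(i,o_j)$, $p'(d_j,\phi_i)=p(i,o_j)$, $p'(i,\phi_i)=1-\sum_{o}p(i,o)$, $p'(d_j,o_j)=1-\sum_{i}p(i,o_j)$, all other entries $0$. A deterministic matching $q$ for $I'$ is weakly stable if there are no $a,b\in N'$, $c,c'\in O'$ with $q(a,c')=1$, $q(b,c)=1$, $c\succ'_a c'$, $a\succ'_c b$. *)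

(* Defs.v *)
From mathcomp Require Import all_boot.
Set Implicit Arguments. Unset Strict Implicit. Unset Printing Implicit Defensive.

(* Agents N = 'I_n, objects O = 'I_m; the null object / null agent is [None].
   Agent preferences: apref i : rel (option 'I_m)  (apref i x y  <=>  x ≿_i y).
   Object priorities: opref o : rel (option 'I_n)  (opref o x y  <=>  x ≿_o y). *)

Definition strict {T} (r : rel T) (x y : T) : bool := r x y && ~~ r y x.

Definition weak_order {T} (r : rel T) : Prop := total r /\ transitive r.

Section Instance.
Variables (n m : nat).
Variable apref : 'I_n -> rel (option 'I_m).
Variable opref : 'I_m -> rel (option 'I_n).

Definition general_instance : Prop :=
  (forall i, weak_order (apref i)) /\ (forall o, weak_order (opref o)) /\
  (forall i o, strict (apref i) (Some o) None \/ strict (apref i) None (Some o)) /\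
  (forall o i, strict (opref o) (Some i) None \/ strict (opref o) None (Some i)).

Definition acc_ag (i : 'I_n) (o : 'I_m) : bool := strict (apref i) (Some o) None.
Definition acc_ob (o : 'I_m) (i : 'I_n) : bool := strict (opref o) (Some i) None.
Definition acceptable_pair i o : bool := acc_ag i o && acc_ob o i.

Definition gen_det_matching (p : 'I_n -> 'I_m -> nat) : Prop :=
  (forall i o, p i o = 0 \/ p i o = 1) /\
  (forall i, \sum_(o < m) p i o <= 1) /\
  (forall o, \sum_(i < n) p i o <= 1).

Definition indiv_rational (p : 'I_n -> 'I_m -> nat) : Prop :=
  forall i o, strict (apref i) None (Some o) \/ strict (opref o) None (Some i) ->
    p i o = 0.

Definition weakly_stable (p : 'I_n -> 'I_m -> nat) : Prop :=
  indiv_rational p /\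
  ~ (exists i o, acceptable_pair i o /\
       \sum_(o' < m | apref i (Some o') (Some o)) p i o' = 0 /\
       \sum_(j < n | opref o (Some j) (Some i)) p j o = 0).

(* ---------- Associated instance I' ----------
   N' = N ∪ D  is  'I_n + 'I_m   (inl i = agent i, inr j = dummy d_j)
   O' = O ∪ Φ  is  'I_m + 'I_n   (inl o = object o, inr i = null object φ_i) *)
Definition agentT' := ('I_n + 'I_m)%type.
Definition objT' := ('I_m + 'I_n)%type.

(* block-lexicographic comparison: strictly ordered blocks (smaller block number
   = better), and a within-block weak comparison *)
Definition lexb (b1 b2 : nat) (w : bool) : bool := (b1 < b2) || ((b1 == b2) && w).

Definition blk_ag (i : 'I_n) (c : objT') : nat :=
  match c with
  | inl o => if acc_ag i o then 0 else 3
  | inr k => if k == i then 1 else 2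
  end.
Definition win_ag (i : 'I_n) (c c' : objT') : bool :=
  match c, c' with
  | inl o, inl o' => apref i (Some o) (Some o')
  | inr k, inr l => (k <= l)%N
  | _, _ => true
  end.

Definition blk_d (j : 'I_m) (c : objT') : nat :=
  match c with
  | inl o => if o == j then 0 else 1
  | inr _ => 2
  end.
Definition win_d (j : 'I_m) (c c' : objT') : bool :=
  match c, c' with
  | inl o, inl o' => (o <= o')%N
  | inr k, inr l => opref j (Some k) (Some l)
  | _, _ => true
  end.

Definition apref' (a : agentT') : rel objT' :=
  fun c c' => match a with
  | inl i => lexb (blk_ag i c) (blk_ag i c') (win_ag i c c')
  | inr j => lexb (blk_d j c) (blk_d j c') (win_d j c c')
  end.

Definition blk_ob (j : 'I_m) (a : agentT') : nat :=
  match a with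
  | inl i => if acc_ob j i then 0 else 3
  | inr k => if k == j then 1 else 2
  end.
Definition win_ob (j : 'I_m) (a a' : agentT') : bool :=
  match a, a' with
  | inl i, inl i' => opref j (Some i) (Some i')
  | inr k, inr l => (k <= l)%N
  | _, _ => true
  end.

Definition blk_phi (i : 'I_n) (a : agentT') : nat :=
  match a with
  | inl k => if k == i then 0 else 1
  | inr _ => 2
  end.
Definition win_phi (i : 'I_n) (a a' : agentT') : bool :=
  match a, a' with
  | inl k, inl l => (k <= l)%N
  | inr k, inr l => apref i (Some k) (Some l)
  | _, _ => true
  end.

Definition opref' (c : objT') : rel agentT' :=
  fun a a' => match c with
  | inl j => lexb (blk_ob j a) (blk_ob j a') (win_ob j a a')
  | inr i => lexb (blk_phi i a) (blk_phi i a') (win_phi i a a')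
  end.

Definition assoc_matching (p : 'I_n -> 'I_m -> nat) (a : agentT') (c : objT') : nat :=
  match a, c with
  | inl i, inl o => p i o
  | inr j, inr i => p i j
  | inl i, inr k => if k == i then 1 - \sum_(o < m) p i o else 0
  | inr j, inl o => if o == j then 1 - \sum_(i < n) p i j else 0
  end.

Definition weakly_stable' (q : agentT' -> objT' -> nat) : Prop :=
  ~ (exists (a b : agentT') (c c' : objT'),
       [/\ q a c' = 1, q b c = 1, strict (apref' a) c c' & strict (opref' c) a b]).

End Instance.

(* Main.v *)
Require Import Defs.
From mathcomp Require Import all_boot.
From mathcomp Require Import zify.

Lemma sum0P (T : finType) (P : pred T) (F : T -> nat) :
  \sum_(x | P x) F x = 0 -> forall x, P x -> F x = 0.
Proof. move=> h x Px; move: h; rewrite (bigD1 x) //=; lia. Qed.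

Lemma sum_ex (T : finType) (F : T -> nat) :
  \sum_x F x != 0 -> exists x, F x != 0.
Proof.
case: (pickP (fun x => F x != 0)) => [x hx|h]; first by exists x.
rewrite big1 // => x _; by move: (h x) => /negbFE/eqP.
Qed.

Lemma two_uniq (T : finType) (F : T -> nat) x y :
  \sum_z F z <= 1 -> F x = 1 -> F y = 1 -> x = y.
Proof.
move=> hs hx hy; apply/eqP; apply/negPn/negP => ne.
move: hs; rewrite (bigD1 x) //= (bigD1 y) /=; last by rewrite eq_sym ne.
rewrite hx hy; lia.
Qed.

Lemma strict_trans T (r : rel T) : transitive r ->
  forall x y z, strict r x y -> strict r y z -> strict r x z.
Proof.
move=> tr x y z /andP[rxy nyx] /andP[ryz nzy]; apply/andP; split.
  exact: tr rxy ryz.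
apply/negP => rzx; move/negP: nzy; apply; exact: tr rzx rxy.
Qed.

Lemma strict_tot T (r : rel T) : total r -> forall x y, ~~ r x y -> strict r y x.
Proof. move=> to x y h; rewrite /strict h andbT; case/orP: (to x y) => //; by rewrite (negbTE h). Qed.

Arguments sum_ex {T F}.
Arguments strict_trans {T r}.
Arguments strict_tot {T r}.

Theorem proposition22 (n m : nat) (hn : 0 < n) (hm : 0 < m)
    (apref : 'I_n -> rel (option 'I_m)) (opref : 'I_m -> rel (option 'I_n))
    (p : 'I_n -> 'I_m -> nat) :
  general_instance apref opref ->
  gen_det_matching p ->
  weakly_stable apref opref p <->
  weakly_stable' apref opref (assoc_matching p).
Proof.
move=> [wa [wo [ga go]]] [p01 [rs cs]].
have rowU : forall i o o', p i o = 1 -> p i o' = 1 -> o = o'.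
  move=> i o o'; exact: two_uniq (rs i).
have colU : forall o i i', p i o = 1 -> p i' o = 1 -> i = i'.
  move=> o i i'; exact: (@two_uniq _ (fun j => p j o)) (cs o).
have nacc_ag : forall i o, ~~ acc_ag apref i o -> strict (apref i) None (Some o).
  by move=> i o; rewrite /acc_ag; case: (ga i o) => ->.
have nacc_ob : forall o i, ~~ acc_ob opref o i -> strict (opref o) None (Some i).
  by move=> o i; rewrite /acc_ob; case: (go o i) => ->.
split.
- move=> [ir nbp] [a [b [c [c' [h1 h2 h3 h4]]]]].
  have irp : forall i o, p i o = 1 -> acc_ag apref i o /\ acc_ob opref o i.
    move=> i o h; split; apply/negPn/negP => na.
      by move: (ir i o (or_introl (nacc_ag _ _ na))); rewrite h.
    by move: (ir i o (or_intror (nacc_ob _ _ na))); rewrite h.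
  case: a h1 h3 h4 => [i|j] h1 h3 h4; case: c h2 h3 h4 => [o|k] h2 h3 h4.
  + have [Aag Hrow] : acc_ag apref i o /\
        forall o', apref i (Some o') (Some o) -> p i o' = 0.
      case: c' h1 h3 => [o''|k] /= h1 h3.
      * have [ag'' _] := irp _ _ h1.
        move: h3; rewrite /strict /= /lexb ag''.
        case: (acc_ag apref i o) => //= /andP[_ hx].
        split=> // o' ho'; case: (p01 i o') => // h'.
        rewrite (rowU _ _ _ h' h1) in ho'. by rewrite ho' in hx.
      * case: eqP h1 => // E h1; subst k.
        have z : \sum_(o0 < m) p i o0 = 0 by move: h1 (rs i); case: (\sum_(_ < m) _) => [|[|]].
        move: h3; rewrite /strict /= /lexb eqxx.
        case: (acc_ag apref i o) => //= _.
        split=> // o' _; exact: (@sum0P _ xpredT (p i) z o').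
    have [Aob Hcol] : acc_ob opref o i /\
        forall j, opref o (Some j) (Some i) -> p j o = 0.
      case: b h2 h4 => [i'|j'] /= h2 h4.
      * have [_ ob'] := irp _ _ h2.
        move: h4; rewrite /strict /= /lexb ob'.
        case: (acc_ob opref o i) => //= /andP[_ hx].
        split=> // j hj; case: (p01 j o) => // h'.
        rewrite (colU _ _ _ h' h2) in hj. by rewrite hj in hx.
      * case: eqP h2 => // E h2; subst j'.
        have z : \sum_(i0 < n) p i0 o = 0 by move: h2 (cs o); case: (\sum_(_ < n) _) => [|[|]].
        move: h4; rewrite /strict /= /lexb eqxx.
        case: (acc_ob opref o i) => //= _.
        split=> // j _; exact: (@sum0P _ xpredT (fun j => p j o) z j).
    apply: nbp; exists i, o; split; first by rewrite /acceptable_pair Aag Aob.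
    by split; apply: big1.
  + case: c' h1 h3 => [o''|k'] /= h1 h3.
    * have [ag'' _] := irp _ _ h1.
      move: h3; rewrite /strict /= /lexb ag''. by case: (k == i).
    * case: eqP h1 => // E _; subst k'. move: h3; rewrite /strict /= /lexb eqxx.
      case: eqP => [->|] //=; by rewrite leqnn.
  + case: b h2 h4 => [i'|j'] /= h2 h4.
    * have [_ ob'] := irp _ _ h2.
      move: h4; rewrite /strict /= /lexb ob'. by case: (j == o).
    * case: eqP h2 => // E _; subst j'. move: h4; rewrite /strict /= /lexb eqxx.
      case: eqP => [->|] //=; by rewrite leqnn.
  + case: c' h1 h3 => [o'|i] /= h1 h3.
    * case: eqP h1 => // E _; subst o'. by move: h3; rewrite /strict /= /lexb eqxx.
    * case: b h2 h4 => [k'|j'] /= h2 h4.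
      - case: eqP h2 => // E _; subst k'. by move: h4; rewrite /strict /= /lexb eqxx.
      - have s3 : strict (opref j) (Some k) (Some i) by move: h3; rewrite /strict /= /lexb.
        have s4 : strict (apref k) (Some j) (Some j') by move: h4; rewrite /strict /= /lexb.
        have [agi obi] := irp _ _ h1; have [agk obk] := irp _ _ h2.
        apply: nbp; exists k, j; split.
          rewrite /acceptable_pair /acc_ag /acc_ob; apply/andP; split.
            exact: strict_trans (proj2 (wa k)) _ _ _ s4 agk.
          exact: strict_trans (proj2 (wo j)) _ _ _ s3 obi.
        split; apply: big1.
          move=> o' ho'; case: (p01 k o') => // h'.
          rewrite (rowU _ _ _ h' h2) in ho'. by move: s4 => /andP[_]; rewrite ho'.
        move=> l hl; case: (p01 l j) => // h'.
        rewrite (colU _ _ _ h' h1) in hl. by move: s3 => /andP[_]; rewrite hl.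
- move=> ws'; split.
  + move=> i o [h|h]; case: (p01 i o) => // h1; exfalso; apply: ws'.
    * have na : acc_ag apref i o = false.
        by move: h; rewrite /acc_ag /strict => /andP[-> _]; rewrite andbF.
      exists (inl i), (inr o), (inr i), (inl o); split => //=;
        rewrite /strict /= /lexb ?na ?eqxx //.
    * have na : acc_ob opref o i = false.
        by move: h; rewrite /acc_ob /strict => /andP[-> _]; rewrite andbF.
      exists (inr o), (inl i), (inl o), (inr i); split => //=;
        rewrite /strict /= /lexb ?na ?eqxx //.
  + move=> [i [o [/andP[ai ao] [s1 s2]]]]; apply: ws'.
    have [c' [hc1 hc2]] : exists c', assoc_matching p (inl i) c' = 1 /\
        strict (apref' apref opref (inl i)) (inl o) c'.
      case: (boolP (\sum_(o0 < m) p i o0 == 0)) => [/eqP z|nz].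
        exists (inr i); rewrite /= eqxx z; split => //.
        by rewrite /strict /= /lexb ai eqxx.
      have [o'' ho''] := sum_ex nz.
      have h'' : p i o'' = 1 by case: (p01 i o'') ho'' => ->.
      exists (inl o''); split => //.
      have nge : ~~ apref i (Some o'') (Some o).
        apply/negP => ge.
        move: (@sum0P _ (fun o' => apref i (Some o') (Some o)) (p i) s1 o'' ge).
        by rewrite h''.
      have st := strict_tot (proj1 (wa i)) _ _ nge.
      rewrite /strict /= /lexb ai.
      by case: (acc_ag apref i o'') => //=.
    have [b [hb1 hb2]] : exists b, assoc_matching p b (inl o) = 1 /\
        strict (opref' apref opref (inl o)) (inl i) b.
      case: (boolP (\sum_(j < n) p j o == 0)) => [/eqP z|nz].
        exists (inr o); rewrite /= eqxx z; split => //.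
        by rewrite /strict /= /lexb ao eqxx.
      have [j hj] := sum_ex nz.
      have h'' : p j o = 1 by case: (p01 j o) hj => ->.
      exists (inl j); split => //.
      have nge : ~~ opref o (Some j) (Some i).
        apply/negP => ge.
        move: (@sum0P _ (fun j => opref o (Some j) (Some i)) (fun j => p j o) s2 j ge).
        by rewrite h''.
      have st := strict_tot (proj1 (wo o)) _ _ nge.
      rewrite /strict /= /lexb ao.
      by case: (acc_ob opref o j) => //=.
    by exists (inl i), b, (inl o), c'.
Qed.
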